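(* Let $M=(S,\mathrm{Act},P)$ be an MDP, $T\subseteq S$, $\mathrm{opt}\in\{\min,\max\}$, and let $r\in\mathbb{N}_\infty^S$ satisfy $\tilde D^{\mathrm{opt}}(r)\le r$ (pointwise). Then for all $s\in S$: if $r(s)<\infty$ then $\Pr^{\mathrm{opt}}_s(\Diamond T)<1$.
   Context: An MDP is a tuple $M=(S,\mathrm{Act},P)$ with $S$ finite, $\mathrm{Act}$ finite, $P\colon S\times\mathrm{Act}\times S\to[0,1]$ with $\sum_{s'}P(s,a,s')\in\{0,1\}$; $\mathrm{Act}(s)=\{a\mid\sum_{s'}P(s,a,s')=1\}$ is nonempty for all $s$; $\mathrm{Post}(s,a)=\{s'\mid P(s,a,s')>0\}$. A strategy is $\sigma\colon S\to\mathrm{Act}$ with $\sigma(s)\in\mathrm{Act}(s)$, inducing a Markov chain with transitions $P(s,\sigma(s),\cdot)$; $\Pr^\sigma_s(\Diamond T)$ is the probability of visiting $T$ from $s$ and $\Pr^{\mathrm{opt}}_s(\Diamond T)=\mathrm{opt}_\sigma\Pr^\sigma_s(\Diamond T)$. $\mathbb{N}_\infty=\mathbb{N}\cup\{\infty\}$ with $\infty+1=\infty$. The complementary distance operator $\tilde D^{\mathrm{opt}}\colon\mathbb{N}_\infty^S\to\mathbb{N}_\infty^S$ is $\tilde D^{\mathrm{opt}}(r)(s)=\infty$ if $s\in T$, and for $s\notin T$: $\tilde D^{\mathrm{opt}}(r)(s)=\mathrm{opt}_{a\in\mathrm{Act}(s)}\big(\min_{s'\in\mathrm{Post}(s,a)}r(s')+[\exists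 u,v\in\mathrm{Post}(s,a)\colon r(u)\neq r(v)]\big)$, where $[\varphi]\in\{0,1\}$ is the Iverson bracket. *)

(* Defs.v *)
From HB Require Import structures.
From mathcomp Require Import all_boot all_order all_algebra.
From mathcomp Require Import all_classical all_reals all_analysis.

Set Implicit Arguments.
Unset Strict Implicit.
Unset Printing Implicit Defensive.

Import Order.TTheory GRing.Theory Num.Theory.
Import numFieldNormedType.Exports.
Local Open Scope ring_scope.

(* [None] encodes oo, [Some n] encodes the natural number n. *)
Definition ninf := option nat.
Definition ninf_inf : ninf := None.

Definition ninf_le (x y : ninf) : bool :=
  match x, y with
  | _, None => true
  | None, Some _ => false
  | Some a, Some b => (a <= b)%N
  end.

Definition ninf_lt (x y : ninf) : bool := ninf_le x y && (x != y).

Definition ninf_min (x y : ninf) : ninf := if ninf_le x y then x else y.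
Definition ninf_max (x y : ninf) : ninf := if ninf_le x y then y else x.

Definition ninf_addn (x : ninf) (k : nat) : ninf :=
  match x with None => None | Some a => Some (a + k)%N end.

Section MDP.
Variables (R : realType) (S Act : finType).
Variable (P : S -> Act -> S -> R).

Definition is_MDP : Prop :=
  (forall s a s', 0 <= P s a s' <= 1) /\
  (forall s a, \sum_(s' : S) P s a s' = 0 \/ \sum_(s' : S) P s a s' = 1) /\
  (forall s, exists a, \sum_(s' : S) P s a s' = 1).

Definition enabled (s : S) (a : Act) : bool := \sum_(s' : S) P s a s' == 1.

Definition post (s : S) (a : Act) (s' : S) : bool := 0 < P s a s'.

Definition strategy (sigma : {ffun S -> Act}) : bool :=
  [forall s, enabled s (sigma s)].

Variable (T : {set S}).

Fixpoint reach_within (sigma : {ffun S -> Act}) (n : nat) (s : S) : R :=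
  if s \in T then 1 else
  match n with
  | 0 => 0
  | n'.+1 => \sum_(s' : S) P s (sigma s) s' * reach_within sigma n' s'
  end.

(* Pr^sigma_s(<> T): the probability of eventually visiting T, i.e. the limit
   of the (nondecreasing, bounded) step-bounded reachability probabilities. *)
Definition Pr_reach (sigma : {ffun S -> Act}) (s : S) : R :=
  limn (fun n => reach_within sigma n s).

Inductive optimum := Opt_min | Opt_max.

(* Pr^opt_s(<> T) = opt_sigma Pr^sigma_s(<> T), over the (finitely many)
   strategies.  The neutral elements 1 / 0 are harmless since all values lie in
   [0,1] and at least one strategy exists. *)
Definition Pr_opt (opt : optimum) (s : S) : R :=
  match opt with
  | Opt_min => \big[Num.min/1]_(sigma : {ffun S -> Act} | strategy sigma) Pr_reach sigma s
  | Opt_max => \big[Num.max/0]_(sigma : {ffun S -> Act} | strategy sigma) Pr_reach sigma s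
  end.

Definition Dtilde (opt : optimum) (r : S -> ninf) (s : S) : ninf :=
  if s \in T then ninf_inf else
  let val a :=
    ninf_addn (\big[ninf_min/ninf_inf]_(s' : S | post s a s') r s')
              (nat_of_bool [exists u, exists v,
                               [&& post s a u, post s a v & r u != r v]]) in
  match opt with
  | Opt_min => \big[ninf_min/ninf_inf]_(a : Act | enabled s a) val a
  | Opt_max => \big[ninf_max/Some 0%N]_(a : Act | enabled s a) val a
  end.

End MDP.

(* Main.v *)
Require Import Defs.
From HB Require Import structures.
From mathcomp Require Import all_boot all_order all_algebra.
From mathcomp Require Import all_classical all_reals all_analysis.
Import Order.TTheory GRing.Theory Num.Theory.
Import numFieldNormedType.Exports.
Local Open Scope ring_scope.

Lemma big_le_term {A : Type} {I : finType} (le : rel A) (op : A -> A -> A) idx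
  (Pi : pred I) (F : I -> A) (i : I) :
  (forall x, le x x) -> (forall y x z, le x y -> le y z -> le x z) ->
  (forall x y, le (op x y) x) -> (forall x y, le (op x y) y) -> Pi i ->
  le (\big[op/idx]_(j | Pi j) F j) (F i).
Proof.
move=> refl tr opl opr Pii.
have : i \in index_enum I by rewrite mem_index_enum.
elim: (index_enum I) => [|j js IH] //.
rewrite in_cons big_cons => /orP [/eqP <-|Hi].
  by rewrite Pii.
case: (Pi j); last exact: IH.
exact: tr (opr _ _) (IH Hi).
Qed.

Lemma big_attained {A : Type} {I : finType} (op : A -> A -> A) idx
  (Pi : pred I) (F : I -> A) :
  (forall x y, op x y = x \/ op x y = y) ->
  \big[op/idx]_(j | Pi j) F j = idx \/
  exists i, Pi i /\ \big[op/idx]_(j | Pi j) F j = F i.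
Proof.
move=> Hop.
apply: (big_ind (fun m => m = idx \/ exists i, Pi i /\ m = F i)).
- by left.
- move=> x y Hx Hy; by case: (Hop x y) => ->.
- move=> i Hi; right; by exists i.
Qed.

Lemma ninf_le_refl x : ninf_le x x.
Proof. by case: x => //= n; rewrite leqnn. Qed.

Lemma ninf_le_trans y x z : ninf_le x y -> ninf_le y z -> ninf_le x z.
Proof. by case: x y z => [a|] [b|] [c|] //=; apply: leq_trans. Qed.

Lemma ninf_min_l x y : ninf_le (ninf_min x y) x.
Proof.
rewrite /ninf_min; case: ifP => H; first exact: ninf_le_refl.
by move: H; case: x y => [a|] [b|] //= /negbT; rewrite -ltnNge => /ltnW.
Qed.

Lemma ninf_min_r x y : ninf_le (ninf_min x y) y.
Proof.
rewrite /ninf_min; case: ifP => H; last exact: ninf_le_refl. done.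
Qed.

Lemma ninf_max_l x y : ninf_le x (ninf_max x y).
Proof.
rewrite /ninf_max; case: ifP => H; first done. exact: ninf_le_refl.
Qed.

Lemma ninf_max_r x y : ninf_le y (ninf_max x y).
Proof.
rewrite /ninf_max; case: ifP => H; first exact: ninf_le_refl.
by move: H; case: x y => [a|] [b|] //= /negbT; rewrite -ltnNge => /ltnW.
Qed.

Lemma ninf_min_or x y : ninf_min x y = x \/ ninf_min x y = y.
Proof. rewrite /ninf_min; case: ifP; by [left|right]. Qed.

Definition vala (S Act : finType) (R : realType) (P : S -> Act -> S -> R)
  (r : S -> ninf) (s : S) (a : Act) : ninf :=
    ninf_addn (\big[ninf_min/ninf_inf]_(s' : S | post P s a s') r s')
              (nat_of_bool [exists u, exists v,
                               [&& post P s a u, post P s a v & r u != r v]]).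

Lemma rw_bounds (R : realType) (S Act : finType) (P : S -> Act -> S -> R)
  (T : {set S}) (sg : {ffun S -> Act})
  (Hnn : forall x a y, 0 <= P x a y) (Hsum : forall x, \sum_y P x (sg x) y = 1) :
  forall n x, 0 <= reach_within P T sg n x <= 1.
Proof.
elim=> [|n IH] x /=; case: ifP => _; rewrite ?lexx ?ler01 //.
apply/andP; split.
  by apply: sumr_ge0 => y _; apply: mulr_ge0 => //; case/andP: (IH y).
rewrite -(Hsum x); apply: ler_sum => y _.
rewrite -[leRHS]mulr1; apply: ler_wpM2l => //; by case/andP: (IH y).
Qed.
Arguments rw_bounds {R S Act P} T {sg}.


Lemma rw_mono (R : realType) (S Act : finType) (P : S -> Act -> S -> R)
  (T : {set S}) (sg : {ffun S -> Act})
  (Hnn : forall x a y, 0 <= P x a y) (Hsum : forall x, \sum_y P x (sg x) y = 1) :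
  forall n x, reach_within P T sg n x <= reach_within P T sg n.+1 x.
Proof.
elim=> [|n IH] x.
  rewrite [reach_within _ _ _ 0 x]/= [reach_within _ _ _ 1 x]/=; case: ifP => // _.
  by apply: sumr_ge0 => y _; apply: mulr_ge0 => //; case: ifP; rewrite ?ler01 ?lexx.
rewrite [reach_within _ _ _ n.+1 x]/= [reach_within _ _ _ n.+2 x]/=.
case: ifP => // _.
apply: ler_sum => y _; apply: ler_wpM2l => //.
Qed.
Arguments rw_mono {R S Act P} T {sg}.


Lemma rw_cvg (R : realType) (S Act : finType) (P : S -> Act -> S -> R)
  (T : {set S}) (sg : {ffun S -> Act})
  (Hnn : forall x a y, 0 <= P x a y) (Hsum : forall x, \sum_y P x (sg x) y = 1) x :
  cvgn (fun n => reach_within P T sg n x) /\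
  (forall n, reach_within P T sg n x <= Pr_reach P T sg x) /\
  Pr_reach P T sg x <= 1.
Proof.
have nd : nondecreasing_seq (fun n => reach_within P T sg n x).
  apply: homo_leq => //; first exact: le_trans.
  move=> n; exact: rw_mono.
have cv : cvgn (fun n => reach_within P T sg n x).
  apply: nondecreasing_is_cvgn => //; exists 1 => _ [n _ <-].
  by case/andP: (rw_bounds T Hnn Hsum n x).
split => //; split; first exact: nondecreasing_cvgn_le.
apply: limr_le => //; apply: nearW => n.
by case/andP: (rw_bounds T Hnn Hsum n x).
Qed.
Arguments rw_cvg {R S Act P} T {sg}.


Lemma Pr_step (R : realType) (S Act : finType) (P : S -> Act -> S -> R)
  (T : {set S}) (sg : {ffun S -> Act})
  (Hnn : forall x a y, 0 <= P x a y) (Hsum : forall x, \sum_y P x (sg x) y = 1) x :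
  x \notin T ->
  Pr_reach P T sg x <= \sum_y P x (sg x) y * Pr_reach P T sg y.
Proof.
move=> HxT.
have [cv _] := rw_cvg T Hnn Hsum x.
apply: limr_le => //; apply: nearW => -[|n] /=; rewrite (negbTE HxT).
  apply: sumr_ge0 => y _; apply: mulr_ge0 => //.
  have [_ [H1 _]] := rw_cvg T Hnn Hsum y.
  apply: le_trans (H1 0%N); by case/andP: (rw_bounds T Hnn Hsum 0%N y).
apply: ler_sum => y _; apply: ler_wpM2l => //.
by have [_ [H1 _]] := rw_cvg T Hnn Hsum y.
Qed.
Arguments Pr_step {R S Act P} T {sg}.


Lemma Pr_zero (R : realType) (S Act : finType) (P : S -> Act -> S -> R)
  (T : {set S}) (sg : {ffun S -> Act})
  (Hnn : forall x a y, 0 <= P x a y) (C : pred S) :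
  (forall x, C x -> x \notin T) ->
  (forall x y, C x -> 0 < P x (sg x) y -> C y) ->
  forall x, C x -> Pr_reach P T sg x = 0.
Proof.
move=> HCT HCc.
have H0 : forall n x, C x -> reach_within P T sg n x = 0.
  elim=> [|n IH] x Cx /=; rewrite (negbTE (HCT x Cx)) //.
  apply: big1 => y _.
  have := Hnn x (sg x) y; rewrite le_eqVlt => /orP [/eqP <-|Hp]; first by rewrite mul0r.
  by rewrite (IH y (HCc x y Cx Hp)) mulr0.
move=> x Cx; rewrite /Pr_reach.
have -> : (fun n => reach_within P T sg n x) = (fun=> 0).
  by apply: funext => n; apply: H0.
exact: lim_cst.
Qed.
Arguments Pr_zero {R S Act P} T {sg}.


Arguments vala {S Act R} P r s a.

Lemma succ_one (R : realType) (S Act : finType) (P : S -> Act -> S -> R)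
  (T : {set S}) (sg : {ffun S -> Act})
  (Hnn : forall x a y, 0 <= P x a y) (Hsum : forall x, \sum_y P x (sg x) y = 1) x y :
  x \notin T -> Pr_reach P T sg x = 1 -> 0 < P x (sg x) y -> Pr_reach P T sg y = 1.
Proof.
move=> HxT H1 Hp.
have Hst := Pr_step T Hnn Hsum x HxT; rewrite H1 in Hst.
have Hle : forall z, 0 <= P x (sg x) z * (1 - Pr_reach P T sg z).
  move=> z; apply: mulr_ge0 => //; rewrite subr_ge0.
  by have [_ [_ ->]] := rw_cvg T Hnn Hsum z.
have Hs0 : \sum_z P x (sg x) z * (1 - Pr_reach P T sg z) = 0.
  apply/eqP; rewrite eq_le sumr_ge0 ?andbT; last by move=> z _; apply: Hle.
  under eq_bigr do rewrite mulrBr mulr1.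
  by rewrite sumrB Hsum subr_le0.
have /psumr_eq0P H := Hs0.
have := H (fun z _ => Hle z) y isT; move/eqP; rewrite mulf_eq0 => /orP [/eqP Hz|].
  by move: Hp; rewrite Hz ltxx.
by rewrite subr_eq0 => /eqP <-.
Qed.
Arguments succ_one {R S Act P} T {sg}.

Lemma chain (R : realType) (S Act : finType) (P : S -> Act -> S -> R)
  (T : {set S}) (sg : {ffun S -> Act})
  (Hnn : forall x a y, 0 <= P x a y) (Hsum : forall x, \sum_y P x (sg x) y = 1)
  (r : S -> ninf)
  (Hc : forall x k, r x = Some k -> x \notin T /\ ninf_le (vala P r x (sg x)) (Some k)) :
  forall k x, r x = Some k -> Pr_reach P T sg x < 1.
Proof.
elim/ltn_ind => k IH x Hx.
have [_ [_ Hle1]] := rw_cvg T Hnn Hsum x.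
rewrite lt_neqAle Hle1 andbT; apply/eqP => H1.
pose C := fun y => (r y == Some k) && (Pr_reach P T sg y == 1).
have HCT : forall y, C y -> y \notin T.
  by move=> y /andP [/eqP Hy _]; case: (Hc y k Hy).
have HCc : forall c y, C c -> 0 < P c (sg c) y -> C y.
  move=> c y /andP [/eqP Hrc /eqP HPc] Hp.
  have [HcT Hv] := Hc c k Hrc.
  have Hone : forall z, 0 < P c (sg c) z -> Pr_reach P T sg z = 1.
    by move=> z Hz; apply: (succ_one T Hnn Hsum c z HcT HPc Hz).
  rewrite /C (Hone y Hp) eqxx andbT.
  move: Hv; rewrite /vala.
  set m := \big[ninf_min/ninf_inf]_(s' | post P c (sg c) s') r s'.
  have Hmy : ninf_le m (r y).
    rewrite /m; apply: (@big_le_term _ _ ninf_le ninf_min ninf_inf (post P c (sg c)) r y).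
    - exact: ninf_le_refl.
    - exact: ninf_le_trans.
    - exact: ninf_min_l.
    - exact: ninf_min_r.
    - exact: Hp.
  have [Hn|[s0 [Hs0 Hm]]] := big_attained ninf_min ninf_inf (post P c (sg c)) r ninf_min_or.
    by rewrite -/m in Hn; rewrite Hn.
  rewrite -/m in Hm.
  have Hs0one := Hone s0 Hs0.
  case Hb : [exists u, exists v, _] => /=.
    rewrite Hm; case Hr0 : (r s0) => [j|] //= Hj.
    have Hjk : (j < k)%N by rewrite -addn1.
    have := IH j Hjk s0 Hr0; by rewrite Hs0one ltxx.
  have Hry : r y = r s0.
    apply/eqP; apply: contraFT Hb => Hne.
    apply/existsP; exists y; apply/existsP; exists s0.
    by apply/and3P; split.
  rewrite Hm -Hry; case Hr0 : (r y) => [j|] //=; rewrite addn0 => Hj.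
  rewrite leq_eqVlt in Hj; case/orP: Hj => [/eqP -> //|Hjk].
  have := IH j Hjk y Hr0; by rewrite (Hone y Hp) ltxx.
have Cx : C x by rewrite /C Hx H1 !eqxx.
have := Pr_zero T Hnn C HCT HCc x Cx.
rewrite H1 => /eqP; by rewrite oner_eq0.
Qed.
Arguments chain {R S Act P} T {sg}.

Theorem proposition2 (R : realType) (S Act : finType) (P : S -> Act -> S -> R)
  (HP : is_MDP P) (T : {set S}) (opt : optimum) (r : S -> ninf)
  (Hr : forall s, ninf_le (Dtilde P T opt r s) (r s)) :
  forall s : S, ninf_lt (r s) ninf_inf -> Pr_opt P T opt s < 1.
Proof.
move=> s Hs.
have [Hb [_ Hex]] := HP.
have Hnn : forall x a y, 0 <= P x a y by move=> x a y; case/andP: (Hb x a y).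
have HrT : forall x k, r x = Some k -> x \notin T.
  move=> x k Hx; apply/negP => HxT; have := Hr x.
  by rewrite /Dtilde HxT Hx; case: opt Hr.
have [k Hk] : exists k, r s = Some k.
  by move: Hs; rewrite /ninf_lt; case: (r s) => [k|] //= _; exists k.
case: opt Hr => Hr.
- have [a0 _] := Hex s.
  pose sg := [ffun x => match [pick b | enabled P x b && ninf_le (vala P r x b) (r x)] with
                        | Some b => b | None => odflt a0 [pick b | enabled P x b] end].
  have Hstrat : forall x, enabled P x (sg x).
    move=> x; rewrite ffunE; case: pickP => [b /andP [] //|_].
    case: pickP => [b //|Hn] /=.
    have [b Hb'] := Hex x; by move: (Hn b); rewrite /enabled Hb' eqxx.
  have Hsum : forall x, \sum_y P x (sg x) y = 1 by move=> x; apply/eqP; exact: Hstrat.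
  have Hc : forall x j, r x = Some j -> x \notin T /\ ninf_le (vala P r x (sg x)) (Some j).
    move=> x j Hx; have HxT := HrT x j Hx; split => //.
    have E : Dtilde P T Opt_min r x =
        \big[ninf_min/ninf_inf]_(a | enabled P x a) vala P r x a.
      by rewrite /Dtilde (negbTE HxT).
    have := Hr x; rewrite E Hx.
    have [-> //|[a [Ha ->]] Hva] := big_attained ninf_min ninf_inf (enabled P x) (vala P r x) ninf_min_or.
    rewrite ffunE; case: pickP => [b /andP [_ Hb2]|Hn]; first by rewrite Hx in Hb2.
    by move: (Hn a); rewrite Ha Hx Hva.
  rewrite /=; apply: le_lt_trans (chain T Hnn Hsum r Hc k s Hk).
  apply: (@big_le_term _ _ (fun x y : R => x <= y) Num.min 1 (strategy P)
            (fun sg => Pr_reach P T sg s) sg).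
  + by move=> x; rewrite lexx.
  + by move=> y x z; apply: le_trans.
  + by move=> x y; rewrite ge_min lexx.
  + by move=> x y; rewrite ge_min lexx orbT.
  + by apply/forallP => x; exact: Hstrat.
- rewrite /=; apply: (big_ind (fun v => v < 1)) => //=.
  + by move=> x y Hx Hy; rewrite gt_max Hx Hy.
  move=> sg /forallP Hstrat.
  have Hsum : forall x, \sum_y P x (sg x) y = 1 by move=> x; apply/eqP; exact: Hstrat.
  have Hc : forall x j, r x = Some j -> x \notin T /\ ninf_le (vala P r x (sg x)) (Some j).
    move=> x j Hx; have HxT := HrT x j Hx; split => //.
    have E : Dtilde P T Opt_max r x =
        \big[ninf_max/Some 0%N]_(a | enabled P x a) vala P r x a.
      by rewrite /Dtilde (negbTE HxT).
    have := Hr x; rewrite E Hx; apply: ninf_le_trans.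
    apply: (@big_le_term _ _ (fun x y => ninf_le y x) ninf_max (Some 0%N) (enabled P x)
              (vala P r x) (sg x)).
    * exact: ninf_le_refl.
    * by move=> y' x' z' H1 H2; apply: ninf_le_trans H2 H1.
    * exact: ninf_max_l.
    * exact: ninf_max_r.
    * exact: Hstrat.
  exact: (chain T Hnn Hsum r Hc k s Hk).
Qed.
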